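(* Let $\mathcal{H}_A,\mathcal{H}_B,\mathcal{H}_C$ be finite-dimensional Hilbert spaces, let $\rho_{ABC}$ be a pure state, and let $Z=\{Z_j\}$ be an orthonormal basis of $\mathcal{H}_A$ (written as rank-one projectors $Z_j$), and let $\mathcal{B}_Z$ be an equivalence class of orthonormal bases of $\mathcal{H}_A$ mutually unbiased w.r.t. $Z$. The following are equivalent: (i) $\rho_{AB}=\sum_j Z_j\rho_{AB}Z_j$; (ii) the $Z$ information about $A$ is perfectly present in $C$; (iii) the state $\tilde\rho_{M_ZAB}=V_Z\rho_{AB}V_Z^\dagger$ is separable across the cut $M_Z|AB$ (a $Z$-measurement produces no entanglement between the measuring register and $AB$); (iv) for every basis $W\in\mathcal{B}_Z$, the $W$ information about $A$ is completely absent from $B$. Moreover, the equivalence of (i), (ii) and (iii) holds for any type of information $Z$ about $A$ (not necessarily rank-one projectors).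
   Context: A type of information $Z=\{Z_j\}_{j=1}^N$ about $A$ is a set of mutually orthogonal projectors on $\mathcal{H}_A$ summing to $I_A$; it is an orthonormal basis when all $Z_j$ are rank one. $\rho_{AB}=\mathrm{Tr}_C\rho_{ABC}$ and $Z_j$ acts as $Z_j\otimes I_B$. Let $M_Z$ be a register with orthonormal basis $\{|j\rangle\}$, $V_Z=\sum_j|j\rangle_{M_Z}\otimes Z_j$. For a type of information $X=\{X_j\}_{j=1}^N$ and a system $Y\in\{B,C\}$ define $p_j=\mathrm{Tr}(X_j\rho_A)$ and $p_j\rho_{Y,j}=\mathrm{Tr}_A[(X_j\otimes I_Y)\rho_{AY}]$. The $X$ information is perfectly present in $Y$ if the operators $\rho_{Y,j}$ (for $p_j>0$) have mutually orthogonal supports; it is completely absent from $Y$ if $p_j=1/N$ for all $j$ and all $\rho_{Y,j}$ are equal (hence equal to $\rho_Y$). A basis $W$ is mutually unbiased w.r.t. the basis $Z=\{|Z_j\rangle\}$ if $|\langle Z_j|W_k\rangle|^2=1/\dim\mathcal{H}_A$ for all $j,k$; two such bases are in the same equivalence class if related by a unitary diagonal in the $Z$ basis (possibly with a relabeling). *)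

(* Defs.v *)
(* complex scalars are an arbitrary numClosedFieldType C
   (e.g. algC, or R[i] for a real closed / real field R). *)
From HB Require Import structures.
From mathcomp Require Import all_boot all_order all_algebra.
From mathcomp Require Import fingroup perm sesquilinear spectral.
From mathcomp Require Import mxtens.

Set Implicit Arguments.
Unset Strict Implicit.
Unset Printing Implicit Defensive.

Import Order.TTheory GRing.Theory Num.Theory.
Local Open Scope ring_scope.
Local Open Scope sesquilinear_scope.

Section Quantum.
Variable C : numClosedFieldType.

(* conjugate transpose: M ^t* = (map_mx conjC M)^T  (spectral.v) *)

Definition hermitian {n} (A : 'M[C]_n) : Prop := A ^t* = A.

Definition psd {n} (A : 'M[C]_n) : Prop :=
  hermitian A /\ forall v : 'cV[C]_n, 0 <= (v ^t* *m A *m v) 0 0.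

Definition density {n} (A : 'M[C]_n) : Prop := psd A /\ \tr A = 1.

Definition pure_state {n} (rho : 'M[C]_n) : Prop :=
  exists psi : 'cV[C]_n, psi ^t* *m psi = 1%:M /\ rho = psi *m psi ^t*.

Definition type_of_info {d N} (Z : 'I_N -> 'M[C]_d) : Prop :=
  [/\ forall j, Z j ^t* = Z j,
      forall i j, Z i *m Z j = if i == j then Z i else 0
    & \sum_(j < N) Z j = 1%:M].

Definition onb {d} (e : 'I_d -> 'cV[C]_d) : Prop :=
  forall i j, e i ^t* *m e j = (i == j)%:R%:M.

Definition vproj {d} (v : 'cV[C]_d) : 'M[C]_d := v *m v ^t*.

Definition basis_proj {d} (e : 'I_d -> 'cV[C]_d) : 'I_d -> 'M[C]_d :=
  fun j => vproj (e j).

Definition mub {d} (z w : 'I_d -> 'cV[C]_d) : Prop :=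
  forall j k, `|(z j ^t* *m w k) 0 0| ^+ 2 = d%:R^-1.

(* w' is in the same equivalence class as w (w.r.t. the basis z):
   w'_k = (phase) * U w_(sigma k), with U unitary and diagonal in the
   z basis and sigma a relabeling. *)
Definition equiv_basis {d} (z w w' : 'I_d -> 'cV[C]_d) : Prop :=
  exists (U : 'M[C]_d) (s : {perm 'I_d}) (lam : 'I_d -> C),
    [/\ U \is unitarymx,
        forall j, exists c : C, U *m z j = c *: z j,
        forall k, `|lam k| = 1
      & forall k, w' k = lam k *: (U *m w (s k))].

Definition ptr2 {m n} (M : 'M[C]_(m * n)) : 'M[C]_m :=
  \matrix_(i, j) \sum_(k < n) M (mxtens_index (i, k)) (mxtens_index (j, k)).
Definition ptr1 {m n} (M : 'M[C]_(m * n)) : 'M[C]_n :=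
  \matrix_(i, j) \sum_(k < m) M (mxtens_index (k, i)) (mxtens_index (k, j)).

(* H_ABC is (H_A (x) H_B) (x) H_C *)
Definition idx3 {a b c} (i : 'I_a) (j : 'I_b) (k : 'I_c) : 'I_(a * b * c) :=
  mxtens_index (mxtens_index (i, j), k).

Definition rhoAB {a b c} (rho : 'M[C]_(a * b * c)) : 'M[C]_(a * b) := ptr2 rho.

Definition rhoAC {a b c} (rho : 'M[C]_(a * b * c)) : 'M[C]_(a * c) :=
  \matrix_(i, j) \sum_(k < b)
     rho (idx3 (mxtens_unindex i).1 k (mxtens_unindex i).2)
         (idx3 (mxtens_unindex j).1 k (mxtens_unindex j).2).

Definition prob {dA dY N} (X : 'I_N -> 'M[C]_dA) (rAY : 'M[C]_(dA * dY))
  (j : 'I_N) : C := \tr (X j *m ptr2 rAY).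

Definition cond_state {dA dY N} (X : 'I_N -> 'M[C]_dA) (rAY : 'M[C]_(dA * dY))
  (j : 'I_N) : 'M[C]_dY :=
  (prob X rAY j)^-1 *: ptr1 (tensmx (X j) (1%:M : 'M[C]_dY) *m rAY).

Definition orth_supp {n} (A B : 'M[C]_n) : Prop := A ^t* *m B = 0.

Definition perfectly_present {dA dY N} (X : 'I_N -> 'M[C]_dA)
  (rAY : 'M[C]_(dA * dY)) : Prop :=
  forall i j, i != j -> 0 < prob X rAY i -> 0 < prob X rAY j ->
    orth_supp (cond_state X rAY i) (cond_state X rAY j).

Definition completely_absent {dA dY N} (X : 'I_N -> 'M[C]_dA)
  (rAY : 'M[C]_(dA * dY)) : Prop :=
  (forall j, prob X rAY j = N%:R^-1) /\
  (forall i j, cond_state X rAY i = cond_state X rAY j).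

(* V_Z = sum_j |j>_(M_Z) (x) Z_j (acting as Z_j (x) I_B) : H_AB -> H_M (x) H_AB *)
Definition VZ {dA dB N} (Z : 'I_N -> 'M[C]_dA) : 'M[C]_(N * (dA * dB), dA * dB) :=
  \matrix_(i, k) tensmx (Z (mxtens_unindex i).1) (1%:M : 'M[C]_dB)
                         (mxtens_unindex i).2 k.

Definition separable {m n} (rho : 'M[C]_(m * n)) : Prop :=
  exists (K : nat) (p : 'I_K -> C) (s : 'I_K -> 'M[C]_m) (t : 'I_K -> 'M[C]_n),
    [/\ forall k, 0 <= p k, forall k, density (s k), forall k, density (t k)
      & rho = \sum_(k < K) p k *: tensmx (s k) (t k)].

Definition cond_i {dA dB N} (Z : 'I_N -> 'M[C]_dA) (rAB : 'M[C]_(dA * dB)) : Prop :=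
  rAB = \sum_(j < N) tensmx (Z j) (1%:M : 'M[C]_dB) *m rAB
                      *m tensmx (Z j) (1%:M : 'M[C]_dB).

Definition cond_iii {dA dB N} (Z : 'I_N -> 'M[C]_dA) (rAB : 'M[C]_(dA * dB)) : Prop :=
  separable (VZ Z *m rAB *m (VZ Z) ^t*).

End Quantum.

(* Main.v *)
Require Import Defs.
From HB Require Import structures.
From mathcomp Require Import all_boot all_order all_algebra.
From mathcomp Require Import fingroup perm sesquilinear spectral.
From mathcomp Require Import mxtens.
From mathcomp Require Import ring.

Set Implicit Arguments.
Unset Strict Implicit.
Unset Printing Implicit Defensive.
Import Order.TTheory GRing.Theory Num.Theory.
Local Open Scope ring_scope.
Local Open Scope sesquilinear_scope.

Section Aux.
Variable C : numClosedFieldType.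

Lemma adjM m n p (A : 'M[C]_(m, n)) (B : 'M[C]_(n, p)) :
  (A *m B) ^t* = B ^t* *m A ^t*.
Proof. by rewrite trmx_mul map_mxM. Qed.

Lemma adjD m n (A B : 'M[C]_(m, n)) : (A + B) ^t* = A ^t* + B ^t*.
Proof. by apply/matrixP=> i j; rewrite !mxE rmorphD. Qed.

Lemma adjB m n (A B : 'M[C]_(m, n)) : (A - B) ^t* = A ^t* - B ^t*.
Proof. by apply/matrixP=> i j; rewrite !mxE rmorphB. Qed.

Lemma adjZ m n a (A : 'M[C]_(m, n)) : (a *: A) ^t* = a^* *: A ^t*.
Proof. by apply/matrixP=> i j; rewrite !mxE rmorphM. Qed.

Lemma adj0 m n : (0 : 'M[C]_(m, n)) ^t* = 0.
Proof. by apply/matrixP=> i j; rewrite !mxE rmorph0. Qed.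

Lemma adj1 n : (1%:M : 'M[C]_n) ^t* = 1%:M.
Proof. by apply/matrixP=> i j; rewrite !mxE eq_sym rmorph_nat. Qed.

Lemma adj_sum m n I (r : seq I) (P : pred I) (F : I -> 'M[C]_(m, n)) :
  (\sum_(i <- r | P i) F i) ^t* = \sum_(i <- r | P i) (F i) ^t*.
Proof.
apply/matrixP=> x y; rewrite !mxE summxE rmorph_sum.
by rewrite summxE; apply: eq_bigr=> i _; rewrite !mxE.
Qed.

Lemma adj_tens m n p q (A : 'M[C]_(m, n)) (B : 'M[C]_(p, q)) :
  (A *t B) ^t* = A ^t* *t B ^t*.
Proof. by apply/matrixP=> i j; rewrite !mxE rmorphM. Qed.

Lemma tr_adj n (A : 'M[C]_n) : \tr (A ^t*) = (\tr A)^*.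
Proof. by rewrite /mxtrace rmorph_sum; apply: eq_bigr=> i _; rewrite !mxE. Qed.

Lemma sum_tens (V : nmodType) m n (F : 'I_(m * n) -> V) :
  \sum_(i < m * n) F i = \sum_(a < m) \sum_(b < n) F (mxtens_index (a, b)).
Proof.
rewrite pair_big /= (reindex (@mxtens_index m n)) /=.
  by apply: eq_bigr=> -[a b].
by exists (@mxtens_unindex m n)=> i _; rewrite (mxtens_indexK, mxtens_unindexK).
Qed.


Lemma tens1E m n p (A : 'M[C]_(m, p)) a b a' b' :
  (A *t (1%:M : 'M[C]_n)) (mxtens_index (a, b)) (mxtens_index (a', b')) =
  A a a' * (b == b')%:R.
Proof. by rewrite tensmxE mxE. Qed.

Lemma sum_deltaL n (f : 'I_n -> C) b :
  \sum_(b' < n) (b == b')%:R * f b' = f b.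
Proof.
rewrite (bigD1 b) //= eqxx mul1r big1 ?addr0 // => b' nb.
by rewrite eq_sym (negbTE nb) mul0r.
Qed.

Lemma sum_deltaR n (f : 'I_n -> C) b :
  \sum_(b' < n) f b' * (b' == b)%:R = f b.
Proof.
rewrite (bigD1 b) //= eqxx mulr1 big1 ?addr0 // => b' nb.
by rewrite (negbTE nb) mulr0.
Qed.

Lemma sum_deltaM n (f : 'I_n -> C) c b :
  \sum_(b' < n) c * (b == b')%:R * f b' = c * f b.
Proof.
rewrite (bigD1 b) //= eqxx mulr1 big1 ?addr0 // => b' nb.
by rewrite eq_sym (negbTE nb) mulr0 mul0r.
Qed.

Lemma tens_sumL m n p q I (r : seq I) (P : pred I) (F : I -> 'M[C]_(m, n))
   (B : 'M[C]_(p, q)) :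
  (\sum_(i <- r | P i) F i) *t B = \sum_(i <- r | P i) (F i *t B).
Proof.
apply/matrixP=> x y; rewrite !mxE !summxE mulr_suml.
by apply: eq_bigr=> i _; rewrite !mxE.
Qed.

Lemma tensZl m n p q a (A : 'M[C]_(m, n)) (B : 'M[C]_(p, q)) :
  (a *: A) *t B = a *: (A *t B).
Proof. by apply/matrixP=> x y; rewrite !mxE mulrA. Qed.

Lemma tens11 m n : (1%:M : 'M[C]_m) *t (1%:M : 'M[C]_n) = 1%:M.
Proof.
apply/matrixP=> x y.
case: (mxtens_indexP x)=> a b; case: (mxtens_indexP y)=> a' b'.
rewrite tensmxE !mxE (inj_eq (can_inj (@mxtens_indexK m n))) xpair_eqE.
by case: (a == a'); case: (b == b'); rewrite /= ?mulr1 ?mulr0.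
Qed.

Lemma ptr1D m n (R1 R2 : 'M[C]_(m * n)) : ptr1 (R1 + R2) = ptr1 R1 + ptr1 R2.
Proof. by apply/matrixP=> x y; rewrite !mxE -big_split; apply: eq_bigr=> i _; rewrite !mxE. Qed.

Lemma ptr1Z m n a (R : 'M[C]_(m * n)) : ptr1 (a *: R) = a *: ptr1 R.
Proof. by apply/matrixP=> x y; rewrite !mxE mulr_sumr; apply: eq_bigr=> i _; rewrite !mxE. Qed.

Lemma ptr1_sum m n I (r : seq I) (P : pred I) (F : I -> 'M[C]_(m * n)) :
  ptr1 (\sum_(i <- r | P i) F i) = \sum_(i <- r | P i) ptr1 (F i).
Proof.
apply/matrixP=> x y; rewrite !mxE summxE.
under eq_bigr do rewrite summxE.
rewrite exchange_big /=; apply: eq_bigr=> i _.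
by rewrite !mxE.
Qed.

Lemma tr_ptr1 m n (R : 'M[C]_(m * n)) : \tr (ptr1 R) = \tr R.
Proof.
rewrite /mxtrace sum_tens exchange_big /=; apply: eq_bigr=> b _.
by rewrite mxE.
Qed.

Lemma tr_ptr2 m n (R : 'M[C]_(m * n)) : \tr (ptr2 R) = \tr R.
Proof.
rewrite /mxtrace sum_tens /=; apply: eq_bigr=> b _.
by rewrite mxE.
Qed.


Lemma ptr1_sandwich m n (A B : 'M[C]_m) (R : 'M[C]_(m * n)) :
  ptr1 ((A *t (1%:M : 'M[C]_n)) *m R *m (B *t (1%:M : 'M[C]_n))) =
  ptr1 (((B *m A) *t (1%:M : 'M[C]_n)) *m R).
Proof.
apply/matrixP=> b b'; rewrite !mxE.
under eq_bigr do rewrite mxE sum_tens.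
under eq_bigr=> i _ do under eq_bigr=> a _ do
   [under eq_bigr=> y _ do rewrite tens1E mulrA; rewrite sum_deltaR mxE sum_tens;
    under eq_bigr=> x _ do [under eq_bigr=> y _ do rewrite tens1E; rewrite sum_deltaM]].
under [RHS]eq_bigr=> k _ do [rewrite mxE sum_tens;
    under eq_bigr=> x _ do [under eq_bigr=> y _ do rewrite tens1E; rewrite sum_deltaM mxE mulr_suml]].
rewrite exchange_big /=; apply: eq_bigr=> k _.
under eq_bigr=> i _ do rewrite mulr_suml.
rewrite exchange_big /=; apply: eq_bigr=> x _.
apply: eq_bigr=> i _; rewrite mulrC mulrA mulrAC; congr (_ * _); exact: mulrC.
Qed.


Lemma tr_mul_ptr2 m n (X : 'M[C]_m) (R : 'M[C]_(m * n)) :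
  \tr (X *m ptr2 R) = \tr (ptr1 ((X *t (1%:M : 'M[C]_n)) *m R)).
Proof.
rewrite tr_ptr1 /mxtrace sum_tens.
apply: eq_bigr=> a _; rewrite mxE.
under eq_bigr=> x _ do rewrite mxE mulr_sumr.
under [RHS]eq_bigr=> b _ do [rewrite mxE sum_tens;
    under eq_bigr=> x _ do [under eq_bigr=> y _ do rewrite tens1E; rewrite sum_deltaM]].
by rewrite exchange_big.
Qed.

Lemma sandE m n (A B : 'M[C]_m) (R : 'M[C]_(m * n)) a b a' b' :
  ((A *t (1%:M : 'M[C]_n)) *m R *m (B *t (1%:M : 'M[C]_n)))
     (mxtens_index (a, b)) (mxtens_index (a', b')) =
  \sum_(x < m) \sum_(x' < m) A a x * R (mxtens_index (x, b)) (mxtens_index (x', b')) * B x' a'.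
Proof.
rewrite mxE sum_tens.
under eq_bigr=> x' _ do [under eq_bigr=> y _ do rewrite tens1E mulrA; rewrite sum_deltaR mxE sum_tens;
    under eq_bigr=> x _ do [under eq_bigr=> y _ do rewrite tens1E; rewrite sum_deltaM]].
rewrite exchange_big /=; apply: eq_bigr=> x _; rewrite mulr_suml.
by apply: eq_bigr=> x' _.
Qed.

Lemma block_lemma m n (u v : 'cV[C]_m) (R : 'M[C]_(m * n)) :
  ((u *m u ^t*) *t (1%:M : 'M[C]_n)) *m R *m ((v *m v ^t*) *t (1%:M : 'M[C]_n)) =
  (u *m v ^t*) *t ptr1 (((v *m u ^t*) *t (1%:M : 'M[C]_n)) *m R).
Proof.
apply/matrixP=> i j.
case: (mxtens_indexP i)=> a b; case: (mxtens_indexP j)=> a' b'.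
rewrite sandE tensmxE [ptr1 _ _ _]mxE.
under [in RHS]eq_bigr=> y _ do [rewrite mxE sum_tens;
    under eq_bigr=> x _ do [under eq_bigr=> z _ do rewrite tens1E; rewrite sum_deltaM]].
rewrite exchange_big mulr_sumr; apply: eq_bigr=> x _.
rewrite mulr_sumr; apply: eq_bigr=> x' _.
rewrite !mxE !big_ord1 !mxE.
by ring.
Qed.


Lemma trAAtE m n (A : 'M[C]_(m, n)) :
  \tr (A *m A ^t*) = \sum_i \sum_j A i j * (A i j)^*.
Proof. by apply: eq_bigr=> i _; rewrite mxE; apply: eq_bigr=> j _; rewrite !mxE. Qed.

Lemma trAAt_ge0 m n (A : 'M[C]_(m, n)) : 0 <= \tr (A *m A ^t*).
Proof. by rewrite trAAtE; apply: sumr_ge0=> i _; apply: sumr_ge0=> j _; apply: mul_conjC_ge0. Qed.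

Lemma trAAt0 m n (A : 'M[C]_(m, n)) : \tr (A *m A ^t*) = 0 -> A = 0.
Proof.
rewrite trAAtE=> H.
have pos : forall k : 'I_m, true -> 0 <= \sum_j A k j * (A k j)^*.
  by move=> k _; apply: sumr_ge0=> l _; apply: mul_conjC_ge0.
have {}H := psumr_eq0P pos H.
apply/matrixP=> i j; rewrite mxE.
have Hi := H i isT.
have {}Hi := psumr_eq0P (fun l _ => mul_conjC_ge0 (A i l)) Hi.
by apply/eqP; rewrite -mul_conjC_eq0; apply/eqP; apply: Hi.
Qed.

Lemma AAt0 m n (A : 'M[C]_(m, n)) : A *m A ^t* = 0 -> A = 0.
Proof. by move=> h; apply: trAAt0; rewrite h mxtrace0. Qed.

Lemma AtA0 m n (A : 'M[C]_(m, n)) : A ^t* *m A = 0 -> A = 0.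
Proof.
move=> h; have : A ^t* = 0 by apply: AAt0; rewrite trmxCK.
by move=> h2; rewrite -[A]trmxCK h2 adj0.
Qed.

Lemma herm_AAt m n (A : 'M[C]_(m, n)) : (A *m A ^t*) ^t* = A *m A ^t*.
Proof. by rewrite adjM trmxCK. Qed.

Lemma psd_AAt m n (A : 'M[C]_(m, n)) : psd (A *m A ^t*).
Proof.
split; first exact: herm_AAt.
move=> v.
have -> : v ^t* *m (A *m A ^t*) *m v = (A ^t* *m v) ^t* *m (A ^t* *m v).
  by rewrite adjM trmxCK !mulmxA.
have -> : ((A ^t* *m v) ^t* *m (A ^t* *m v)) 0 0 = \tr ((A ^t* *m v) ^t* *m (A ^t* *m v)).
  by rewrite /mxtrace big_ord1.
by rewrite mxtrace_mulC; apply: trAAt_ge0.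
Qed.


Lemma tr11 (A : 'M[C]_1) : \tr A = A 0 0.
Proof. by rewrite /mxtrace big_ord1. Qed.


Lemma cv_ge0 n (x : 'cV[C]_n) : 0 <= (x ^t* *m x) 0 0.
Proof. by rewrite -tr11 mxtrace_mulC; apply: trAAt_ge0. Qed.

Lemma cv_eq0 n (x : 'cV[C]_n) : (x ^t* *m x) 0 0 = 0 -> x = 0.
Proof. by rewrite -tr11 mxtrace_mulC; apply: trAAt0. Qed.

Lemma psd_zero n (H : 'M[C]_n) (v : 'cV[C]_n) :
  psd H -> (v ^t* *m H *m v) 0 0 = 0 -> H *m v = 0.
Proof.
move=> [hH pH] hv; set w := H *m v.
have vH : v ^t* *m H = w ^t* by rewrite /w adjM hH.
set a := (w ^t* *m w) 0 0.
set c := (w ^t* *m H *m w) 0 0.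
have a0 : 0 <= a by apply: cv_ge0.
have c0 : 0 <= c by apply: pH.
have vHw : (v ^t* *m H *m w) 0 0 = a by rewrite vH.
have wHv : (w ^t* *m H *m v) 0 0 = a by rewrite -mulmxA.
set al := c + 1.
set u := al *: v - a *: w.
have al0 : 0 <= al by rewrite /al addr_ge0 ?ler01.
have E : (u ^t* *m H *m u) 0 0 =
   al * al * (v ^t* *m H *m v) 0 0 - al * a * (v ^t* *m H *m w) 0 0
   - a * al * (w ^t* *m H *m v) 0 0 + a * a * c.
  rewrite /u adjB !adjZ (geC0_conj al0) (geC0_conj a0).
  rewrite mulmxBl -!scalemxAl mulmxBr -!scalemxAr.
  rewrite !mulmxBl -!scalemxAl /c.
  set p1 := v ^t* *m H *m v; set p2 := v ^t* *m H *m w.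
  set p3 := w ^t* *m H *m v; set p4 := w ^t* *m H *m w.
  rewrite !mxE; ring.
have := pH u; rewrite E hv vHw wHv /al.
have -> : (c + 1) * (c + 1) * 0 - (c + 1) * a * a - a * (c + 1) * a + a * a * c
   = - (a * a * (c + 2)) by ring.
rewrite oppr_ge0 => h.
have c2 : 0 < c + 2 by apply: (lt_le_trans (ltr0n _ 2)); rewrite lerDr.
rewrite pmulr_lle0 // in h.
have aa : a * a = 0 by apply/eqP; rewrite eq_le h mulr_ge0.
apply: cv_eq0; rewrite -/a.
by move/eqP: aa; rewrite mulf_eq0 orbb => /eqP.
Qed.


Lemma adj_delta m n (i : 'I_m) (j : 'I_n) : (delta_mx i j : 'M[C]_(m, n)) ^t* = delta_mx j i.
Proof. by apply/matrixP=> x y; rewrite !mxE rmorph_nat andbC. Qed.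

Lemma quad_delta n (M : 'M[C]_n) (i : 'I_n) :
  (((delta_mx i 0 : 'cV[C]_n) ^t*) *m M *m (delta_mx i 0 : 'cV[C]_n)) 0 0 = M i i.
Proof. by rewrite adj_delta -(rowE i M) -(colE i (row i M)) !mxE. Qed.

Lemma psd_tr0 n (H Q : 'M[C]_n) :
  psd H -> Q ^t* = Q -> \tr (Q *m H *m Q) = 0 -> H *m Q = 0.
Proof.
move=> pH hQ htr.
have qi : forall i, ((Q *m (delta_mx i 0 : 'cV[C]_n)) ^t* *m H *m (Q *m (delta_mx i 0 : 'cV[C]_n))) 0 0
                    = (Q *m H *m Q) i i.
  by move=> i; rewrite adjM hQ -[RHS]quad_delta !mulmxA.
have pos : forall i : 'I_n, true -> 0 <= (Q *m H *m Q) i i.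
  by move=> i _; rewrite -qi; apply: pH.2.
have := psumr_eq0P pos htr => h0.
apply/matrixP=> j i; rewrite mxE.
have := psd_zero pH (etrans (qi i) (h0 i isT)).
by move/matrixP/(_ j 0); rewrite mulmxA -colE !mxE.
Qed.


Definition Mpsi a b c (psi : 'cV[C]_(a * b * c)) : 'M[C]_(a * b, c) :=
  \matrix_(x, k) psi (mxtens_index (x, k)) 0.

Lemma rhoAB_pure a b c (psi : 'cV[C]_(a * b * c)) :
  rhoAB (psi *m psi ^t*) = Mpsi psi *m (Mpsi psi) ^t*.
Proof.
apply/matrixP=> x y; rewrite !mxE; apply: eq_bigr=> k _.
by rewrite !mxE big_ord1 !mxE.
Qed.

Lemma tr_pure n (psi : 'cV[C]_n) : psi ^t* *m psi = 1%:M -> \tr (psi *m psi ^t*) = 1.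
Proof. by move=> h; rewrite mxtrace_mulC h mxtrace1. Qed.

Lemma rhoAC_cond a b c (psi : 'cV[C]_(a * b * c)) (Z : 'M[C]_a) :
  ptr1 ((Z *t (1%:M : 'M[C]_c)) *m rhoAC (psi *m psi ^t*)) =
  ((Mpsi psi) ^t* *m (Z *t (1%:M : 'M[C]_b)) *m Mpsi psi)^T.
Proof.
apply/matrixP=> k k'; rewrite !mxE.
under eq_bigr=> x _ do [rewrite mxE sum_tens;
   under eq_bigr=> y _ do [under eq_bigr=> z _ do rewrite tens1E; rewrite sum_deltaM]].
rewrite sum_tens.
under eq_bigr=> x _ do [under eq_bigr=> y _ do
   rewrite mxE !mxtens_indexK /= mulr_sumr].
under [RHS]eq_bigr=> a0 _ do [under eq_bigr=> b0 _ do
   [rewrite mxE sum_tens mulr_suml;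
    under eq_bigr=> x _ do [under eq_bigr=> y _ do rewrite tens1E mulrA;
      rewrite sum_deltaR]]; rewrite exchange_big /=].
rewrite [RHS]exchange_big /=; apply: eq_bigr=> x _.
apply: eq_bigr=> y _; apply: eq_bigr=> z _.
by rewrite !mxE big_ord1 !mxE; ring.
Qed.


Lemma VZE dA dB N (Z : 'I_N -> 'M[C]_dA) (R : 'M[C]_(dA * dB)) j x j' y :
  (VZ Z *m R *m (VZ Z) ^t*) (mxtens_index (j, x)) (mxtens_index (j', y)) =
  ((Z j *t (1%:M : 'M[C]_dB)) *m R *m (Z j' *t (1%:M : 'M[C]_dB)) ^t*) x y.
Proof.
rewrite !mxE; apply: eq_bigr=> l _; rewrite !mxE; congr (_ * _).
  by apply: eq_bigr=> k _; rewrite !mxE !mxtens_indexK.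
by rewrite !mxtens_indexK.
Qed.


Lemma sep_entry m n K (p : 'I_K -> C) (s : 'I_K -> 'M[C]_m) (t : 'I_K -> 'M[C]_n) j x j' y :
  (\sum_(k < K) p k *: (s k *t t k)) (mxtens_index (j, x)) (mxtens_index (j', y)) =
  \sum_(k < K) p k * (s k j j' * t k x y).
Proof. by rewrite summxE; apply: eq_bigr=> k _; rewrite mxE tensmxE. Qed.

Definition projfam n N (P : 'I_N -> 'M[C]_n) :=
  [/\ forall j, P j ^t* = P j,
      forall i j, P i *m P j = if i == j then P i else 0
    & \sum_(j < N) P j = 1%:M].

Definition offdiag n N (P : 'I_N -> 'M[C]_n) (R : 'M[C]_n) :=
  forall i j, i != j -> P i *m R *m P j = 0.

Lemma offdiagP n N (P : 'I_N -> 'M[C]_n) (R : 'M[C]_n) : projfam P ->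
  (R = \sum_(j < N) P j *m R *m P j) <-> offdiag P R.
Proof.
move=> [hP oP sP]; split.
  move=> -> i j nij; rewrite mulmx_sumr mulmx_suml big1 // => k _.
  rewrite !mulmxA oP -!mulmxA oP.
  case: (eqVneq i k)=> [<-|_]; last by rewrite mul0mx.
  by rewrite (negbTE nij) !mulmx0.
move=> od.
have {1}-> : R = (\sum_(i < N) P i) *m R *m (\sum_(j < N) P j) by rewrite sP mul1mx mulmx1.
rewrite mulmx_suml mulmx_suml; apply: eq_bigr=> i _.
rewrite mulmx_sumr (bigD1 i) //= big1 ?addr0 // => j nj.
by apply: od; rewrite eq_sym.
Qed.

Lemma tinfo_projfam dA dB N (Z : 'I_N -> 'M[C]_dA) : type_of_info Z ->
  projfam (fun j => Z j *t (1%:M : 'M[C]_dB)).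
Proof.
move=> [hZ oZ sZ]; split.
- by move=> j; rewrite adj_tens hZ adj1.
- move=> i j; rewrite tensmx_mul oZ mulmx1.
  by case: (i == j)=> //; rewrite tens0mx.
- by rewrite -tens_sumL sZ tens11.
Qed.


Lemma XY0 r s n (X : 'M[C]_(r, n)) (Y : 'M[C]_(s, n)) :
  X ^t* *m X *m (Y ^t* *m Y) = 0 -> X *m Y ^t* = 0.
Proof.
move=> h.
have hA : X *m Y ^t* *m Y = 0.
  apply: AtA0; rewrite !adjM trmxCK.
  have -> : Y ^t* *m (Y *m X ^t*) *m (X *m Y ^t* *m Y) =
            Y ^t* *m Y *m (X ^t* *m X *m (Y ^t* *m Y)) by rewrite !mulmxA.
  by rewrite h mulmx0.
by apply: AAt0; rewrite adjM trmxCK !mulmxA hA mul0mx.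
Qed.

Lemma psd_scale n c (H : 'M[C]_n) : 0 <= c -> psd H -> psd (c *: H).
Proof.
move=> c0 [hH pH]; split; first by rewrite /Defs.hermitian adjZ geC0_conj // hH.
by move=> v; rewrite -scalemxAr -scalemxAl mxE mulr_ge0 // pH.
Qed.

Lemma delta_sq n (j : 'I_n) :
  (delta_mx j j : 'M[C]_n) = (delta_mx j 0 : 'cV[C]_n) *m (delta_mx j 0 : 'cV[C]_n) ^t*.
Proof. by rewrite adj_delta mul_delta_mx. Qed.

Lemma density_delta n (j : 'I_n) : density (delta_mx j j : 'M[C]_n).
Proof.
split; first by rewrite delta_sq; apply: psd_AAt.
by rewrite delta_sq mxtrace_mulC adj_delta mul_delta_mx tr11 mxE !eqxx.
Qed.

Lemma trQHQ_ge0 n (H Q : 'M[C]_n) : psd H -> Q ^t* = Q -> 0 <= \tr (Q *m H *m Q).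
Proof.
move=> pH hQ; apply: sumr_ge0=> i _.
have -> : (Q *m H *m Q) i i =
   ((Q *m (delta_mx i 0 : 'cV[C]_n)) ^t* *m H *m (Q *m (delta_mx i 0 : 'cV[C]_n))) 0 0.
  by rewrite adjM hQ -[LHS]quad_delta !mulmxA.
exact: pH.2.
Qed.

Lemma herm_entry n (H : 'M[C]_n) i j : Defs.hermitian H -> H i j = (H j i)^*.
Proof. by move=> h; rewrite -{1}h !mxE. Qed.

Lemma psd_diag0 n (H : 'M[C]_n) i j : psd H -> H i i = 0 -> H i j = 0 /\ H j i = 0.
Proof.
move=> pH h0.
have := psd_zero pH (etrans (quad_delta H i) h0).
move/matrixP/(_ j 0); rewrite -colE !mxE => hji.
by split=> //; rewrite herm_entry ?hji ?rmorph0 //; case: pH.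
Qed.


Lemma pure_pos n (psi : 'cV[C]_n) : psi ^t* *m psi = 1%:M -> (0 < n)%N.
Proof.
case: n psi=> // psi h; have := congr1 (fun M : 'M[C]_1 => M 0 0) h.
by rewrite /= !mxE big_ord0 eqxx => /eqP; rewrite eq_sym oner_eq0.
Qed.

Lemma adjT_herm m (X : 'M[C]_m) : X ^t* = X -> (X^T) ^t* = X^T.
Proof. by move=> h; rewrite -[in RHS]h; apply/matrixP=> i j; rewrite !mxE. Qed.

Section Part1.
Variables (dA dB dC : nat) (psi : 'cV[C]_(dA * dB * dC)).
Hypothesis hpsi : psi ^t* *m psi = 1%:M.
Variables (N : nat) (Z : 'I_N -> 'M[C]_dA).
Hypothesis hZ : type_of_info Z.

Let M := Mpsi psi.
Let P j := Z j *t (1%:M : 'M[C]_dB).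
Let Mj j := P j *m M.
Let rho := psi *m psi ^t*.

Lemma pf : projfam P. Proof. exact: tinfo_projfam. Qed.

Lemma Pherm j : (P j) ^t* = P j. Proof. by case: pf. Qed.

Lemma PRP i j : P i *m rhoAB rho *m P j = Mj i *m (Mj j) ^t*.
Proof. by rewrite rhoAB_pure adjM Pherm !mulmxA. Qed.

Lemma PRPt i j : P i *m rhoAB rho *m (P j) ^t* = Mj i *m (Mj j) ^t*.
Proof. by rewrite Pherm PRP. Qed.

Lemma X_eq j : M ^t* *m P j *m M = (Mj j) ^t* *m Mj j.
Proof.
case: pf=> hP oP _.
by rewrite adjM hP !mulmxA -(mulmxA _ (P j) (P j)) oP eqxx.
Qed.

Lemma prob_eq j : prob Z (rhoAC rho) j = \tr (Mj j *m (Mj j) ^t*).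
Proof.
rewrite /prob tr_mul_ptr2 rhoAC_cond mxtrace_tr -/M -/(P j) X_eq.
by rewrite mxtrace_mulC.
Qed.

Lemma cond_eq j : cond_state Z (rhoAC rho) j =
  (prob Z (rhoAC rho) j)^-1 *: ((Mj j) ^t* *m Mj j)^T.
Proof. by rewrite /cond_state rhoAC_cond -/M -/(P j) X_eq. Qed.

Lemma i_iff_off : cond_i Z (rhoAB rho) <-> offdiag P (rhoAB rho).
Proof. exact: (offdiagP (rhoAB rho) pf). Qed.

Lemma i_to_ii : offdiag P (rhoAB rho) -> perfectly_present Z (rhoAC rho).
Proof.
move=> od i j nij _ _; rewrite /orth_supp !cond_eq adjZ -scalemxAl -scalemxAr.
set Xi := (Mj i) ^t* *m Mj i; set Xj := (Mj j) ^t* *m Mj j.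
have hXi : (Xi^T) ^t* = Xi^T.
  apply: adjT_herm. rewrite /Xi adjM trmxCK. done.
rewrite hXi.
have -> : Xi^T *m Xj^T = (Xj *m Xi)^T by rewrite [RHS]trmx_mul.
have -> : Xj *m Xi = (Mj j) ^t* *m (Mj j *m (Mj i) ^t*) *m Mj i by rewrite /Xi /Xj !mulmxA.
have := od j i; rewrite eq_sym => /(_ nij); rewrite PRP => ->.
by rewrite mulmx0 mul0mx trmx0 !scaler0.
Qed.


Lemma ii_to_i : perfectly_present Z (rhoAC rho) -> offdiag P (rhoAB rho).
Proof.
move=> pp i j nij; rewrite PRP.
case: (eqVneq (prob Z (rhoAC rho) i) 0)=> hi.
  by move: hi; rewrite prob_eq => /trAAt0 ->; rewrite mul0mx.
case: (eqVneq (prob Z (rhoAC rho) j) 0)=> hj.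
  by move: hj; rewrite prob_eq => /trAAt0 ->; rewrite adj0 mulmx0.
have gi : 0 < prob Z (rhoAC rho) i by rewrite lt_def hi prob_eq trAAt_ge0.
have gj : 0 < prob Z (rhoAC rho) j by rewrite lt_def hj prob_eq trAAt_ge0.
have := pp i j nij gi gj.
rewrite /orth_supp !cond_eq adjZ -scalemxAl -scalemxAr scalerA.
move/eqP; rewrite scaler_eq0 mulf_eq0 conjC_eq0 !invr_eq0 (negbTE hi) (negbTE hj) /=.
set Xi := (Mj i) ^t* *m Mj i; set Xj := (Mj j) ^t* *m Mj j.
have hXi : (Xi^T) ^t* = Xi^T by apply: adjT_herm; rewrite /Xi adjM trmxCK.
rewrite hXi -trmx_mul => /eqP /(congr1 trmx); rewrite trmxK trmx0 => h.
have : Mj j *m (Mj i) ^t* = 0 by apply: XY0.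
by move/(congr1 (fun X => X ^t*)); rewrite adjM trmxCK adj0.
Qed.


Lemma i_to_iii : offdiag P (rhoAB rho) -> cond_iii Z (rhoAB rho).
Proof.
move=> od.
have : (0 < dA * dB)%N by have := pure_pos hpsi; rewrite muln_gt0 => /andP[].
move=> pos; pose x0 := Ordinal pos.
pose p j := \tr (Mj j *m (Mj j) ^t*).
exists N, p, (fun j => delta_mx j j),
  (fun j => if p j == 0 then delta_mx x0 x0 else (p j)^-1 *: (Mj j *m (Mj j) ^t*)).
split.
- by move=> k; apply: trAAt_ge0.
- by move=> k; apply: density_delta.
- move=> k; case: ifP=> hk; first exact: density_delta.
  split; first by apply: psd_scale; [rewrite invr_ge0; apply: trAAt_ge0 | apply: psd_AAt].
  by rewrite mxtraceZ mulVf ?hk.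
apply/matrixP=> I J; case: (mxtens_indexP I)=> j x; case: (mxtens_indexP J)=> j' y.
rewrite VZE sep_entry PRPt (bigD1 j) //= big1 ?addr0; last first.
  by move=> k nk; rewrite mxE eq_sym (negbTE nk) /= mul0r mulr0.
rewrite [delta_mx _ _ _ _]mxE eqxx /=.
case: (eqVneq j' j)=> [->|nj]; last first.
  have := od j j'; rewrite eq_sym => /(_ nj); rewrite PRP => ->.
  by rewrite mxE mul0r mulr0.
rewrite mul1r; case: ifP=> hp.
  by move/eqP: hp => hp; rewrite hp mul0r; move/trAAt0: hp => ->; rewrite mul0mx mxE.
by rewrite [in RHS]mxE mulrA divff ?hp // mul1r.
Qed.


Lemma iii_to_i : cond_iii Z (rhoAB rho) -> offdiag P (rhoAB rho).
Proof.
case=> K [p [s [t [p0 ds dt eq]]]].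
set R := rhoAB rho.
have ent : forall j1 j2 x y, (P j1 *m R *m (P j2) ^t*) x y =
    \sum_(k < K) p k * (s k j1 j2 * t k x y).
  by move=> j1 j2 x y; rewrite -VZE eq sep_entry.
case: pf=> hP oP _.
pose Q j := 1%:M - P j.
have hQ : forall j, (Q j) ^t* = Q j by move=> j; rewrite /Q adjB adj1 hP.
have QP : forall j, Q j *m P j = 0.
  by move=> j; rewrite /Q mulmxBl mul1mx oP eqxx subrr.
have diag : forall j k, p k * s k j j * \tr (Q j *m t k *m Q j) = 0.
  move=> j.
  have Dj : P j *m R *m (P j) ^t* = \sum_(k < K) (p k * s k j j) *: t k.
    apply/matrixP=> x y; rewrite ent summxE; apply: eq_bigr=> k _.
    by rewrite mxE mulrA.
  have Z0 : Q j *m (P j *m R *m (P j) ^t*) *m Q j = 0.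
    by rewrite !mulmxA QP !mul0mx.
  have : \tr (Q j *m (P j *m R *m (P j) ^t*) *m Q j) = 0 by rewrite Z0 mxtrace0.
  rewrite Dj mulmx_sumr mulmx_suml raddf_sum /=.
  under eq_bigr=> k _ do rewrite -scalemxAr -scalemxAl mxtraceZ.
  move=> h k; apply: (psumr_eq0P _ h)=> // k' _.
  rewrite mulr_ge0 ?mulr_ge0 //; last by apply: trQHQ_ge0; [case: (dt k')|].
  by rewrite -quad_delta; case: (ds k') => -[_ ->].
move=> i j nij; apply/matrixP=> x y.
rewrite -[P j in LHS]hP ent mxE big1 // => k _.
rewrite mulrA.
suff -> : p k * s k i j = 0 by rewrite mul0r.
case: (eqVneq (p k) 0)=> [->|pk]; first by rewrite mul0r.
case: (eqVneq (s k i i) 0)=> [sii|sii].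
  by rewrite (psd_diag0 j (ds k).1 sii).1 mulr0.
case: (eqVneq (s k j j) 0)=> [sjj|sjj].
  by rewrite (psd_diag0 i (ds k).1 sjj).2 mulr0.
have tri : \tr (Q i *m t k *m Q i) = 0.
  by have := diag i k; move/eqP; rewrite !mulf_eq0 (negbTE pk) (negbTE sii) /= => /eqP.
have trj : \tr (Q j *m t k *m Q j) = 0.
  by have := diag j k; move/eqP; rewrite !mulf_eq0 (negbTE pk) (negbTE sjj) /= => /eqP.
have ti := psd_tr0 (dt k).1 (hQ i) tri.
have tj := psd_tr0 (dt k).1 (hQ j) trj.
have tPi : t k *m P i = t k.
  by move: ti; rewrite /Q mulmxBr mulmx1 => /eqP; rewrite subr_eq0 => /eqP <-.
have tPj : t k *m P j = t k.
  by move: tj; rewrite /Q mulmxBr mulmx1 => /eqP; rewrite subr_eq0 => /eqP <-.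
have t0 : t k = 0 by rewrite -tPj -tPi -mulmxA oP (negbTE nij) mulmx0.
by have := (dt k).2; rewrite t0 mxtrace0 => /eqP; rewrite eq_sym oner_eq0.
Qed.

End Part1.

Lemma onb_complete d (e : 'I_d -> 'cV[C]_d) : onb e ->
  \sum_(j < d) e j *m (e j) ^t* = 1%:M.
Proof.
move=> he; pose E : 'M[C]_d := \matrix_(i, j) e j i 0.
have h1 : E ^t* *m E = 1%:M.
  apply/matrixP=> i j; transitivity ((e i ^t* *m e j) 0 0).
    by rewrite !mxE; apply: eq_bigr=> k _; rewrite !mxE.
  by rewrite he !mxE eqxx mulr1n.
have h2 := mulmx1C h1.
apply/matrixP=> x y; rewrite -h2 summxE !mxE; apply: eq_bigr=> j _.
by rewrite !mxE big_ord1 !mxE.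
Qed.

Lemma vproj_mul d (z w : 'cV[C]_d) :
  vproj z *m vproj w *m vproj z =
  ((z ^t* *m w) 0 0 * ((z ^t* *m w) 0 0)^*) *: vproj z.
Proof.
rewrite /vproj.
have -> : z *m z ^t* *m (w *m w ^t*) *m (z *m z ^t*) =
   z *m (z ^t* *m w) *m (w ^t* *m z) *m z ^t* by rewrite !mulmxA.
set a := (z ^t* *m w) 0 0.
have ea : z ^t* *m w = a%:M by apply: mx11_scalar.
have eb : w ^t* *m z = (a^*)%:M.
  rewrite [LHS]mx11_scalar; congr (_%:M); rewrite /a !mxE rmorph_sum.
  by apply: eq_bigr=> k _; rewrite !mxE rmorphM /= conjCK mulrC.
by rewrite ea eb !mul_mx_scalar scalerA -scalemxAl mulrC.
Qed.

Lemma basis_tinfo d (z : 'I_d -> 'cV[C]_d) : onb z -> type_of_info (basis_proj z).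
Proof.
move=> hz; split.
- by move=> j; rewrite /basis_proj /vproj herm_AAt.
- move=> i j; rewrite /basis_proj /vproj.
  have -> : z i *m (z i) ^t* *m (z j *m (z j) ^t*) = z i *m ((z i) ^t* *m z j) *m (z j) ^t*.
    by rewrite !mulmxA.
  rewrite hz; case: eqVneq=> [->|_]; first by rewrite mulmx1.
  by rewrite -scalemx1 scale0r mulmx0 mul0mx.
- exact: onb_complete.
Qed.

Lemma mix_ptr1 d n (z : 'I_d -> 'cV[C]_d) (w : 'cV[C]_d) (R : 'M[C]_(d * n)) :
  onb z -> (forall j, `|(z j ^t* *m w) 0 0| ^+ 2 = d%:R^-1) ->
  R = \sum_(j < d) (vproj (z j) *t (1%:M : 'M[C]_n)) *m R *m (vproj (z j) *t (1%:M : 'M[C]_n)) ->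
  ptr1 ((vproj w *t (1%:M : 'M[C]_n)) *m R) = d%:R^-1 *: ptr1 R.
Proof.
move=> hz hm hR; rewrite {1}hR mulmx_sumr ptr1_sum.
have E : forall j, ptr1 ((vproj w *t (1%:M : 'M[C]_n)) *m
     ((vproj (z j) *t (1%:M : 'M[C]_n)) *m R *m (vproj (z j) *t (1%:M : 'M[C]_n)))) =
     d%:R^-1 *: ptr1 ((vproj (z j) *t (1%:M : 'M[C]_n)) *m R).
  move=> j; rewrite !mulmxA tensmx_mul mulmx1 ptr1_sandwich mulmxA vproj_mul.
  by rewrite -normCK hm tensZl -scalemxAl ptr1Z.
under eq_bigr=> j _ do rewrite E.
rewrite -scaler_sumr -ptr1_sum -mulmx_suml -tens_sumL.
by rewrite /vproj onb_complete // tens11 mul1mx.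
Qed.

Lemma absent_of_mub d n (z w : 'I_d -> 'cV[C]_d) (R : 'M[C]_(d * n)) :
  onb z -> mub z w -> cond_i (basis_proj z) R -> \tr R = 1 ->
  completely_absent (basis_proj w) R.
Proof.
move=> hz hm hR htr.
have E : forall k, ptr1 ((basis_proj w k *t (1%:M : 'M[C]_n)) *m R) = d%:R^-1 *: ptr1 R.
  by move=> k; apply: mix_ptr1=> // j; apply: hm.
have Hp : forall k, prob (basis_proj w) R k = d%:R^-1.
  by move=> k; rewrite /prob tr_mul_ptr2 E mxtraceZ tr_ptr1 htr mulr1.
have Hc : forall k, cond_state (basis_proj w) R k = ptr1 R.
  move=> k; rewrite /cond_state Hp E invrK scalerA mulfV ?scale1r //.
  by rewrite pnatr_eq0 -lt0n (leq_ltn_trans (leq0n k) (ltn_ord k)).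
by split=> // i j; rewrite !Hc.
Qed.

Lemma onb_norm d (z : 'I_d -> 'cV[C]_d) j : onb z -> (z j) ^t* *m z j = 1%:M.
Proof. by move=> hz; rewrite hz eqxx. Qed.

Lemma equiv_mub d (z w0 w : 'I_d -> 'cV[C]_d) :
  onb z -> mub z w0 -> equiv_basis z w0 w -> mub z w.
Proof.
move=> hz hm [U [s [lam [hU hd hl hw]]]] j k.
have UU : U ^t* *m U = 1%:M by apply: mulmx1C; apply/unitarymxP.
have [c hc] := hd j.
have cc : c^* * c = 1.
  have := onb_norm j hz.
  have -> : (z j) ^t* *m z j = (U *m z j) ^t* *m (U *m z j) by rewrite adjM mulmxA -(mulmxA _ _ U) UU mulmx1.
  rewrite hc adjZ -scalemxAl -scalemxAr scalerA onb_norm // => /matrixP/(_ 0 0).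
  by rewrite !mxE eqxx /= mulr1n mulr1.
have c0 : c != 0 by apply: contra_eqN cc => /eqP ->; rewrite mulr0 eq_sym oner_eq0.
have Uz : U ^t* *m z j = c^-1 *: z j.
  have h : c *: (U ^t* *m z j) = z j by rewrite scalemxAr -hc mulmxA UU mul1mx.
  by rewrite -{2}h scalerA mulVf // scale1r.
have zU : (z j) ^t* *m U = (c^-1)^* *: (z j) ^t*.
  by rewrite -[U]trmxCK -adjM Uz adjZ.
rewrite hw -scalemxAr mulmxA zU -scalemxAl mxE [X in _ * X]mxE.
rewrite !normrM !exprMn (hm j (s k)).
have -> : `|lam k| ^+ 2 = 1 by rewrite hl expr1n.
have -> : `|(c^-1)^*| ^+ 2 = 1 by rewrite normCK conjCK fmorphV -invfM cc invr1.
by rewrite !mul1r.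
Qed.

Definition Tl : seq C := [:: 1; -1; 'i; - 'i].

Lemma Tl_sum : \sum_(t <- Tl) t = 0.
Proof. by rewrite !big_cons big_nil; ring. Qed.

Lemma Tl_sumC : \sum_(t <- Tl) t^* = 0.
Proof. by rewrite -rmorph_sum Tl_sum rmorph0. Qed.

Lemma Tl_norm1 t : t \in Tl -> t^* * t = 1.
Proof.
move=> ht; rewrite -normCKC.
have : `|t| = 1.
  move: ht; rewrite !inE => /or4P[] /eqP ->; by rewrite ?normrN ?normr1 ?normCi.
by move=> ->; rewrite expr1n.
Qed.

Lemma Tl_sumN : \sum_(t <- Tl) t^* * t = 4%:R.
Proof.
rewrite (eq_big_seq (fun=> 1)); last by move=> t ht; rewrite Tl_norm1.
by rewrite !big_cons big_nil -[in RHS](natr1 3) -(natr1 2) -(natr1 1) -(natr1 0) addr0 add0r; ring.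
Qed.

Lemma Tl_sumN' : \sum_(t <- Tl) t * t^* = 4%:R.
Proof. by rewrite -Tl_sumN; apply: eq_bigr=> t _; rewrite mulrC. Qed.

Lemma Tl_sq : \sum_(t <- Tl) t * t = 0.
Proof.
have ii : 'i * 'i = -1 :> C by rewrite -expr2 sqrCi.
rewrite !big_cons big_nil !mulrNN ii; ring.
Qed.

Lemma Tl_sqC : \sum_(t <- Tl) t^* * t^* = 0.
Proof.
rewrite (eq_bigr (fun t => (t * t)^*)); last by move=> t _; rewrite rmorphM.
by rewrite -rmorph_sum Tl_sq rmorph0.
Qed.

Lemma sum2E (f g : C -> C) (h : C -> C -> C) :
  (forall t s, h t s = f t * g s) ->
  \sum_(t <- Tl) \sum_(s <- Tl) h t s = (\sum_(t <- Tl) f t) * (\sum_(s <- Tl) g s).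
Proof.
move=> hh; rewrite mulr_suml; apply: eq_bigr=> t _; rewrite mulr_sumr.
by apply: eq_bigr=> s _.
Qed.

Definition uts d (j j' : 'I_d) (t s : C) (m : 'I_d) : C :=
  if m == j then t else if m == j' then s else 1.

Lemma fourier_pt d (j j' m m' : 'I_d) : j != j' ->
  \sum_(t <- Tl) \sum_(s <- Tl) t^* * s * (uts j j' t s m * (uts j j' t s m')^*) =
  if (m == j) && (m' == j') then 16%:R else 0.
Proof.
move=> njj.
have nj'j : (j' == j) = false by rewrite eq_sym (negbTE njj).
case: (eqVneq m j)=> [->|mj]; last (case: (eqVneq m j')=> [->|mj']);
(case: (eqVneq m' j)=> [->|mj2]; last (case: (eqVneq m' j')=> [->|mj2']));
rewrite /uts ?eqxx ?nj'j ?(negbTE mj) ?(negbTE mj') ?(negbTE mj2) ?(negbTE mj2') ?(negbTE njj) /= ?rmorph1.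
- rewrite (sum2E (f := fun t => t^* * t * t^*) (g := fun s => s)); last by move=> t s /=; ring.
  by rewrite Tl_sum mulr0.
- rewrite (sum2E (f := fun t => t^* * t) (g := fun s => s * s^*)); last by move=> t s /=; ring.
  by rewrite Tl_sumN Tl_sumN' -natrM.
- rewrite (sum2E (f := fun t => t^* * t) (g := fun s => s)); last by move=> t s /=; ring.
  by rewrite Tl_sum mulr0.
- rewrite (sum2E (f := fun t => t^* * t^*) (g := fun s => s * s)); last by move=> t s /=; ring.
  by rewrite Tl_sqC mul0r.
- rewrite (sum2E (f := fun t => t^*) (g := fun s => s * s * s^*)); last by move=> t s /=; ring.
  by rewrite Tl_sumC mul0r.
- rewrite (sum2E (f := fun t => t^*) (g := fun s => s * s)); last by move=> t s /=; ring.
  by rewrite Tl_sumC mul0r.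
- rewrite (sum2E (f := fun t => t^* * t^*) (g := fun s => s)); last by move=> t s /=; ring.
  by rewrite Tl_sqC mul0r.
- rewrite (sum2E (f := fun t => t^*) (g := fun s => s * s^*)); last by move=> t s /=; ring.
  by rewrite Tl_sumC mul0r.
- rewrite (sum2E (f := fun t => t^*) (g := fun s => s)); last by move=> t s /=; ring.
  by rewrite Tl_sumC mul0r.
Qed.

Lemma abs_ptr1 d n (w : 'I_d -> 'cV[C]_d) (R : 'M[C]_(d * n)) :
  completely_absent (basis_proj w) R -> \sum_(k < d) vproj (w k) = 1%:M ->
  forall k, ptr1 ((vproj (w k) *t (1%:M : 'M[C]_n)) *m R) = d%:R^-1 *: ptr1 R.
Proof.
move=> [hp hc] hs k.
have d0 : d%:R != 0 :> C by rewrite pnatr_eq0 -lt0n (leq_ltn_trans (leq0n k) (ltn_ord k)).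
have X : forall k', ptr1 ((vproj (w k') *t (1%:M : 'M[C]_n)) *m R) =
   d%:R^-1 *: cond_state (basis_proj w) R k.
  move=> k'; rewrite -(hc k') /cond_state hp scalerA mulfV ?scale1r //.
  by rewrite invr_eq0.
have : ptr1 R = cond_state (basis_proj w) R k.
  have -> : ptr1 R = ptr1 (((\sum_(k < d) vproj (w k)) *t (1%:M : 'M[C]_n)) *m R).
    by rewrite hs tens11 mul1mx.
  rewrite tens_sumL mulmx_suml ptr1_sum.
  rewrite (eq_bigr (fun=> d%:R^-1 *: cond_state (basis_proj w) R k)); last by move=> k' _; apply: X.
  by rewrite sumr_const card_ord -scaler_nat scalerA mulfV ?scale1r.
by move=> ->; apply: X.
Qed.

Lemma vproj_sum d (c : 'I_d -> C) (z : 'I_d -> 'cV[C]_d) :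
  vproj (\sum_m c m *: z m) = \sum_m \sum_m' (c m * (c m')^*) *: (z m *m (z m') ^t*).
Proof.
rewrite /vproj adj_sum mulmx_suml; apply: eq_bigr=> m _.
rewrite mulmx_sumr; apply: eq_bigr=> m' _.
by rewrite adjZ -scalemxAl -scalemxAr scalerA.
Qed.

Lemma ptr1_vsum d n (c : 'I_d -> C) (z : 'I_d -> 'cV[C]_d) (R : 'M[C]_(d * n)) :
  ptr1 ((vproj (\sum_m c m *: z m) *t (1%:M : 'M[C]_n)) *m R) =
  \sum_m \sum_m' (c m * (c m')^*) *: ptr1 (((z m *m (z m') ^t*) *t (1%:M : 'M[C]_n)) *m R).
Proof.
rewrite vproj_sum tens_sumL mulmx_suml ptr1_sum; apply: eq_bigr=> m _.
rewrite tens_sumL mulmx_suml ptr1_sum; apply: eq_bigr=> m' _.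
by rewrite tensZl -scalemxAl ptr1Z.
Qed.

Lemma expand_basis d (z : 'I_d -> 'cV[C]_d) (g : 'cV[C]_d) : onb z ->
  g = \sum_m ((z m) ^t* *m g) 0 0 *: z m.
Proof.
move=> hz; rewrite -{1}[g]mul1mx -(onb_complete hz) mulmx_suml.
apply: eq_bigr=> m _; rewrite -mulmxA {1}[_ ^t* *m g]mx11_scalar.
by rewrite mul_mx_scalar.
Qed.

Lemma vproj_z d (z : 'I_d -> 'cV[C]_d) m j : onb z ->
  vproj (z m) *m z j = if m == j then z j else 0.
Proof.
move=> hz; rewrite /vproj -mulmxA hz.
by case: eqVneq=> [->|_]; rewrite ?mulmx1 // -scalemx1 scale0r mulmx0.
Qed.

Definition Udiag d (z : 'I_d -> 'cV[C]_d) (u : 'I_d -> C) : 'M[C]_d :=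
  \sum_m u m *: vproj (z m).

Lemma Udiag_z d (z : 'I_d -> 'cV[C]_d) u j : onb z -> Udiag z u *m z j = u j *: z j.
Proof.
move=> hz; rewrite /Udiag mulmx_suml (bigD1 j) //= big1 ?addr0.
  by rewrite -scalemxAl vproj_z // eqxx.
by move=> m nm; rewrite -scalemxAl vproj_z // (negbTE nm) scaler0.
Qed.

Lemma Udiag_unitary d (z : 'I_d -> 'cV[C]_d) u : onb z -> (forall m, `|u m| = 1) ->
  Udiag z u \is unitarymx.
Proof.
move=> hz hu; apply/unitarymxP.
have [hP oP sP] := basis_tinfo hz.
rewrite /Udiag adj_sum mulmx_suml -[RHS]sP.
apply: eq_bigr=> m _; rewrite mulmx_sumr (bigD1 m) //= big1 ?addr0.
  rewrite adjZ -scalemxAl -scalemxAr scalerA.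
  have -> : vproj (z m) *m (vproj (z m)) ^t* = basis_proj z m by rewrite hP oP eqxx.
  by rewrite -normCK hu expr1n scale1r.
move=> m' nm; rewrite adjZ -scalemxAl -scalemxAr.
have -> : vproj (z m) *m (vproj (z m')) ^t* = 0.
  by have := oP m m'; rewrite (negbTE (negbT (introF eqP (fun e => (negP nm) (introT eqP (esym e))))))=> <-; rewrite hP.
by rewrite !scaler0.
Qed.

Lemma Tl_abs t : t \in Tl -> `|t| = 1.
Proof. by rewrite !inE => /or4P[] /eqP ->; rewrite ?normrN ?normr1 ?normCi. Qed.

Lemma iv_to_i d n (z w0 : 'I_d -> 'cV[C]_d) (R : 'M[C]_(d * n)) :
  onb z -> onb w0 -> mub z w0 ->
  (forall w, equiv_basis z w0 w -> completely_absent (basis_proj w) R) ->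
  cond_i (basis_proj z) R.
Proof.
move=> hz hw0 hm H.
case: (posnP d)=> [d0|dpos].
  by subst d; apply/matrixP=> -[i hi].
pose k0 := Ordinal dpos; pose g := w0 k0.
pose a m := ((z m) ^t* *m g) 0 0.
pose F m m' := ptr1 (((z m *m (z m') ^t*) *t (1%:M : 'M[C]_n)) *m R).
pose K := d%:R^-1 *: ptr1 R.
have Hu : forall u, (forall m, `|u m| = 1) ->
    \sum_m \sum_m' (u m * a m * (u m' * a m')^*) *: F m m' = K.
  move=> u hu; pose w := fun k => Udiag z u *m w0 k.
  have eqb : equiv_basis z w0 w.
    exists (Udiag z u), 1%g, (fun=> 1); split.
    - exact: Udiag_unitary.
    - by move=> j; exists (u j); apply: Udiag_z.
    - by move=> k; rewrite normr1.
    - by move=> k; rewrite perm1 scale1r.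
  have hs : \sum_(k < d) vproj (w k) = 1%:M.
    rewrite /w /vproj.
    under eq_bigr=> k _ do rewrite adjM mulmxA -(mulmxA _ (w0 k)).
    rewrite -mulmx_suml -mulmx_sumr.
    have -> : \sum_(i < d) w0 i *m (w0 i) ^t* = 1%:M by apply: onb_complete.
    by rewrite mulmx1; apply/unitarymxP; apply: Udiag_unitary.
  have := abs_ptr1 (H w eqb) hs k0.
  rewrite /w -/g (expand_basis g hz) mulmx_sumr.
  under eq_bigr=> m _ do rewrite -scalemxAr Udiag_z // scalerA.
  rewrite ptr1_vsum /K => <-; apply: eq_bigr=> m _; apply: eq_bigr=> m' _.
  by rewrite /a /F; congr (_ *: _); ring.
have coef : forall j j' m m', \sum_(t <- Tl) \sum_(s <- Tl)
     t^* * s * (uts j j' t s m * a m * (uts j j' t s m' * a m')^*) =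
     (\sum_(t <- Tl) \sum_(s <- Tl) t^* * s * (uts j j' t s m * (uts j j' t s m')^*))
     * (a m * (a m')^*).
  move=> j j' m m'; rewrite mulr_suml; apply: eq_bigr=> t _.
  rewrite mulr_suml; apply: eq_bigr=> s _; rewrite !rmorphM /=; ring.
have Fz : forall j j', j != j' -> F j j' = 0.
  move=> j j' njj.
  have H2 : forall t s, t \in Tl -> s \in Tl ->
      \sum_m \sum_m' (uts j j' t s m * a m * (uts j j' t s m' * a m')^*) *: F m m' = K.
    move=> t s ht hs; apply: Hu => m; rewrite /uts.
    by case: ifP=> _; [exact: Tl_abs | case: ifP=> _; [exact: Tl_abs | exact: normr1]].
  set L := \sum_(t <- Tl) \sum_(s <- Tl) (t^* * s) *:
      \sum_m \sum_m' (uts j j' t s m * a m * (uts j j' t s m' * a m')^*) *: F m m'.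
  have S0 : L = 0.
    rewrite /L (eq_big_seq (fun t => \sum_(s <- Tl) (t^* * s) *: K)); last first.
      by move=> t ht; apply: eq_big_seq => s hs; rewrite H2.
    under eq_bigr do rewrite -scaler_suml.
    rewrite -scaler_suml (sum2E (f := fun t => t^*) (g := fun s => s)) //.
    by rewrite Tl_sumC mul0r scale0r.
  have S1 : L = (16%:R * (a j * (a j')^*)) *: F j j'.
    rewrite /L.
    under eq_bigr=> t _ do [under eq_bigr=> s _ do
      [rewrite scaler_sumr; under eq_bigr=> m _ do
        [rewrite scaler_sumr; under eq_bigr=> m' _ do rewrite scalerA]]].
    under eq_bigr=> t _ do rewrite exchange_big.
    under eq_bigr=> t _ do under eq_bigr=> m _ do rewrite exchange_big.
    rewrite exchange_big.
    under eq_bigr=> m _ do rewrite exchange_big.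
    under eq_bigr=> m _ do under eq_bigr=> m' _ do
      [under eq_bigr=> t _ do rewrite -scaler_suml; rewrite -scaler_suml coef fourier_pt //].
    rewrite (bigD1 j) //= [X in _ + X]big1 ?addr0; last first.
      move=> m nm; apply: big1=> m' _.
      by rewrite (negbTE nm) mul0r scale0r.
    rewrite (bigD1 j') //= [X in _ + X]big1 ?addr0; last first.
      by move=> m' nm'; rewrite eqxx (negbTE nm') mul0r scale0r.
    by rewrite !eqxx.
  have an : forall m, a m != 0.
    move=> m; apply/negP=> /eqP am.
    have := hm m k0; rewrite -/g -/(a m) am normr0 expr0n /= => /eqP.
    rewrite eq_sym invr_eq0 pnatr_eq0 => /eqP d0.
    by have := dpos; rewrite d0.
  move: S1; rewrite S0 => /esym/eqP; rewrite scaler_eq0 => /orP[|/eqP //].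
  by rewrite !mulf_eq0 pnatr_eq0 /= conjC_eq0 (negbTE (an j)) (negbTE (an j')).
have pf := tinfo_projfam n (basis_tinfo hz).
apply/(offdiagP R pf)=> i j nij.
rewrite /basis_proj block_lemma.
have -> : ptr1 (z j *m (z i) ^t* *t (1%:M : 'M[C]_n) *m R) = F j i by [].
by rewrite Fz ?tensmx0 // eq_sym.
Qed.

Lemma part1 dA dB dC (rho : 'M[C]_(dA * dB * dC)) : pure_state rho ->
  forall (N : nat) (Z : 'I_N -> 'M[C]_dA), type_of_info Z ->
     [<-> cond_i Z (rhoAB rho);
          perfectly_present Z (rhoAC rho);
          cond_iii Z (rhoAB rho)].
Proof.
move=> [psi [hpsi ->]] N Z hZ; tfae.
- by move=> h; apply: i_to_ii => //; apply/i_iff_off.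
- by move=> h; apply: i_to_iii => //; apply: ii_to_i.
- by move=> h; apply/i_iff_off => //; apply: iii_to_i.
Qed.

End Aux.

Theorem corollary1 (C : numClosedFieldType) (dA dB dC : nat)
  (rho : 'M[C]_(dA * dB * dC)) :
  pure_state rho ->
  (forall (N : nat) (Z : 'I_N -> 'M[C]_dA), type_of_info Z ->
     [<-> cond_i Z (rhoAB rho);
          perfectly_present Z (rhoAC rho);
          cond_iii Z (rhoAB rho)])
  /\
  (forall (z w0 : 'I_dA -> 'cV[C]_dA), onb z -> onb w0 -> mub z w0 ->
     [<-> cond_i (basis_proj z) (rhoAB rho);
          perfectly_present (basis_proj z) (rhoAC rho);
          cond_iii (basis_proj z) (rhoAB rho);
          forall w : 'I_dA -> 'cV[C]_dA, equiv_basis z w0 w ->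
            completely_absent (basis_proj w) (rhoAB rho)]).
Proof.
move=> hp; split; first exact: part1.
move=> z w0 hz hw0 hm.
have P1 := part1 hp (basis_tinfo hz).
have trR : \tr (rhoAB rho) = 1.
  by case: hp=> psi [hpsi ->]; rewrite /rhoAB tr_ptr2 tr_pure.
tfae.
- exact: (all_iffLR P1 0 1).
- exact: (all_iffLR P1 1 2).
- move=> h w hw; apply: absent_of_mub=> //.
  + exact: equiv_mub hz hm hw.
  + exact: (all_iffLR P1 2 0).
- exact: iv_to_i.
Qed.
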